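(* Let $\models$ be an intersective mixed consequence truth-relation on a finite set $V$ of truth values, with induced consequence relation $\vdash$ in a constant expressive setting. The following are equivalent: (i) $\vdash$ admits a G-disjunction; (ii) every minimal representation of $\models$ is based on a disjunction-compatible list of sets of designated values; (iii) some representation of $\models$ is based on a disjunction-compatible list of sets of designated values.
   Context: $V$ contains distinct $1,0$; sets of designated values: $\mathcal{D}\subseteq V$, $1\in\mathcal{D}$, $0\notin\mathcal{D}$. $\gamma\models_{\mathcal{D}_p,\mathcal{D}_c}\delta$ iff ($\gamma\subseteq\mathcal{D}_p\Rightarrow\delta\cap\mathcal{D}_c\neq\emptyset$). An intersective mixed truth-relation is $\models_{\mathcal{D}_p^1,\mathcal{D}_c^1}\cap\dots\cap\models_{\mathcal{D}_p^K,\mathcal{D}_c^K}$; such a list is a representation, based on the list of sets $\mathcal{D}_p^1,\mathcal{D}_c^1,\dots,\mathcal{D}_p^K,\mathcal{D}_c^K$; it is minimal if $K$ is least possible. A list $\mathcal{D}_1,\dots,\mathcal{D}_n$ is disjunction-compatible if for all $x,y\in V$ there is $z\in V$ such that for every $i$: $z\in\mathcal{D}_i$ iff ($x\in\mathcal{D}_i$ or $y\in\mathcal{D}_i$). Semantics: valuations mapping atoms to $V$, connectives interpreted by fixed truth functions, extended compositionally, every assignment to finitely many distinct atoms realized; constant expressive: every value is the constant value of some formula. $\Gamma\vdash\Delta$ iff $v(\Gamma)\models v(\Delta)$ for all $v$. A G-disjunction is a binary connective $\vee$ (interpreted by some truth function) with, for all $\Gamma,\Delta,A,B$: $\Gamma\vdash\{A\vee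 B\}\cup\Delta$ iff $\Gamma\vdash\{A,B\}\cup\Delta$; and $\Gamma\cup\{A\vee B\}\vdash\Delta$ iff ($\Gamma\cup\{A\}\vdash\Delta$ and $\Gamma\cup\{B\}\vdash\Delta$). *)

(* Defs.v *)
From mathcomp Require Import all_boot.
From mathcomp Require Import boolp.
Set Implicit Arguments. Unset Strict Implicit. Unset Printing Implicit Defensive.

Section Defs.
Variable V : finType.

Definition designated (one zero : V) (D : {set V}) : bool :=
  (one \in D) && (zero \notin D).

Definition mixed (Dp Dc : {set V}) (g d : {set V}) : Prop :=
  g \subset Dp -> d :&: Dc != set0.

Definition is_rep (one zero : V) (R : {set V} -> {set V} -> Prop)
    (L : seq ({set V} * {set V})) : Prop :=
  [/\ L != [::],
      (forall p, p \in L -> designated one zero p.1 && designated one zero p.2)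
    & forall g d, R g d <-> (forall p, p \in L -> mixed p.1 p.2 g d)].

Definition is_min_rep (one zero : V) R L : Prop :=
  is_rep one zero R L /\
  forall L', is_rep one zero R L' -> size L <= size L'.

Definition rep_sets (L : seq ({set V} * {set V})) : seq {set V} :=
  flatten [seq [:: p.1; p.2] | p <- L].

Definition disj_compatible (Ds : seq {set V}) : Prop :=
  forall x y : V, exists z : V, forall D, D \in Ds ->
    (z \in D) = (x \in D) || (y \in D).

End Defs.

(* Formulas over atoms nat, a signature C with arities ar, and an extra
   binary connective Or (the candidate disjunction). *)
Inductive form (C : Type) (ar : C -> nat) : Type :=
| Atom of nat
| App (c : C) of ('I_(ar c) -> form ar)
| Or of form ar & form ar.

Arguments Atom {C ar}.
Arguments App {C ar}.
Arguments Or {C ar}.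

Fixpoint eval (V : Type) (C : Type) (ar : C -> nat)
    (I : forall c, ('I_(ar c) -> V) -> V) (dis : V -> V -> V)
    (v : nat -> V) (A : form ar) : V :=
  match A with
  | Atom n => v n
  | App c f => I c (fun i => eval I dis v (f i))
  | Or A B => dis (eval I dis v A) (eval I dis v B)
  end.

Fixpoint orfree (C : Type) (ar : C -> nat) (A : form ar) : Prop :=
  match A with
  | Atom _ => True
  | App c f => forall i, orfree (f i)
  | Or _ _ => False
  end.

Definition const_expressive (V : Type) (C : Type) (ar : C -> nat)
    (I : forall c, ('I_(ar c) -> V) -> V) : Prop :=
  forall x : V, exists A : form ar,
    orfree A /\ forall dis v, eval I dis v A = x.

Definition img (V : finType) (C : Type) (ar : C -> nat)
    (I : forall c, ('I_(ar c) -> V) -> V) (dis : V -> V -> V)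
    (v : nat -> V) (G : form ar -> Prop) : {set V} :=
  [set x | `[< exists A, G A /\ eval I dis v A = x >]].

Definition conseq (V : finType) (C : Type) (ar : C -> nat)
    (I : forall c, ('I_(ar c) -> V) -> V) (dis : V -> V -> V)
    (R : {set V} -> {set V} -> Prop) (G D : form ar -> Prop) : Prop :=
  forall v : nat -> V, R (img I dis v G) (img I dis v D).

Definition addf (C : Type) (ar : C -> nat) (A : form ar) (G : form ar -> Prop) :=
  fun X => X = A \/ G X.

Definition G_disjunction (V : finType) (C : Type) (ar : C -> nat)
    (I : forall c, ('I_(ar c) -> V) -> V) (R : {set V} -> {set V} -> Prop)
    (dis : V -> V -> V) : Prop :=
  forall (G D : form ar -> Prop) (A B : form ar),
    (conseq I dis R G (addf (Or A B) D) <->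
     conseq I dis R G (addf A (addf B D))) /\
    (conseq I dis R (addf (Or A B) G) D <->
     (conseq I dis R (addf A G) D /\ conseq I dis R (addf B G) D)).

(* Main.v *)
Require Import Defs.
From mathcomp Require Import all_boot.
From mathcomp Require Import boolp.
From Stdlib Require Import Classical.
Set Implicit Arguments. Unset Strict Implicit. Unset Printing Implicit Defensive.

Section Aux.
Variable V : finType.

Definition ML (L : seq ({set V} * {set V})) g d :=
  forall p, p \in L -> mixed p.1 p.2 g d.

Lemma neq0U1 (z : V) (d P : {set V}) :
  ((z |: d) :&: P != set0) = (z \in P) || (d :&: P != set0).
Proof.
apply/set0Pn/orP.
- case=> w; rewrite !inE => /andP[/orP[/eqP->|wd] wP]; first by left.
  by right; apply/set0Pn; exists w; rewrite inE wd wP.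
- case=> [zP|/set0Pn[w]]; first by exists z; rewrite !inE eqxx zP.
  by rewrite inE => /andP[wd wP]; exists w; rewrite !inE wd wP orbT.
Qed.

Lemma subU1 (z : V) (g P : {set V}) :
  (z |: g \subset P) = (z \in P) && (g \subset P).
Proof. by rewrite subUset sub1set. Qed.

Lemma min_nored (one zero : V) (R : {set V} -> {set V} -> Prop) (L : seq ({set V} * {set V})) : is_min_rep one zero R L ->
  forall p q, p \in L -> q \in L -> p.1 \subset q.1 -> q.2 \subset p.2 -> q = p.
Proof.
case=> [[_ Hd HR] Hmin] p q pL qL s1 s2.
apply/eqP/negPn/negP => qp.
pose L' := filter (predC1 p) L.
have qL' : q \in L' by rewrite mem_filter /= qp.
have rep' : is_rep one zero R L'.
  split.
  - by apply/eqP => E; rewrite E in qL'.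
  - by move=> r; rewrite mem_filter => /andP[_ /Hd].
  - move=> g d; rewrite HR; split.
    + by move=> H r; rewrite mem_filter => /andP[_ /H].
    + move=> H r rL; case: (eqVneq r p) => [->|rp].
      * move=> gp; have := H q qL' (subset_trans gp s1).
        case/set0Pn => w; rewrite inE => /andP[wd wq].
        by apply/set0Pn; exists w; rewrite inE wd (subsetP s2).
      * by apply: H; rewrite mem_filter /= rp.
have := Hmin _ rep'.
rewrite size_filter -(count_predC (predC1 p) L).
have : 0 < count (predC (predC1 p)) L.
  rewrite -has_count; apply/hasP; exists p => //=; by rewrite eqxx.
move=> h1 h2.
move: h2; set a := count (predC1 p) L; set b := count _ L => h2.
move: h2; rewrite -{2}[a]addn0 leq_add2l leqn0 => /eqP b0.
by move: h1; rewrite -/b b0.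
Qed.


Section Key.
Variables (one zero : V) (R : {set V} -> {set V} -> Prop) (L : seq ({set V} * {set V})).
Hypothesis Hm : is_min_rep one zero R L.

Lemma key_c p (d : {set V}) : p \in L -> ~: p.2 \subset d ->
  (ML L p.1 d <-> exists w, w \in d /\ w \in p.2).
Proof.
move=> pL sd; split.
- move=> H; have := H p pL (subxx _); case/set0Pn => w; rewrite inE => /andP[??].
  by exists w.
- case=> w [wd wp] q qL s1; case: (boolP (q.2 \subset p.2)) => s2.
  + rewrite (min_nored Hm pL qL s1 s2); apply/set0Pn; exists w; by rewrite inE wd.
  + case/subsetPn: s2 => u uq up; apply/set0Pn; exists u.
    by rewrite inE uq (subsetP sd) // inE.
Qed.

Lemma key_p p (w : V) : p \in L -> (ML L (w |: p.1) (~: p.2) <-> w \notin p.1).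
Proof.
move=> pL; split.
- move=> H; apply/negP => wp; have := H p pL; rewrite /mixed subU1 wp subxx => /(_ isT).
  case/set0Pn => u; rewrite !inE => /andP[/negP ? ?]; done.
- move=> wp q qL; rewrite /mixed subU1 => /andP[wq s1].
  case: (boolP (q.2 \subset p.2)) => s2.
  + by move: wq; rewrite (min_nored Hm pL qL s1 s2) (negbTE wp).
  + case/subsetPn: s2 => u uq up; apply/set0Pn; exists u.
    by rewrite !inE uq up.
Qed.
End Key.

Lemma mem_rep_sets (L : seq ({set V} * {set V})) (D : {set V}) :
  D \in rep_sets L <-> exists2 p, p \in L & (D = p.1 \/ D = p.2).
Proof.
split.
- case/flatten_mapP => p pL; rewrite !inE => /orP[/eqP|/eqP] ->; exists p; auto.
- case=> p pL [->|->]; apply/flatten_mapP; exists p => //; by rewrite !inE eqxx ?orbT.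
Qed.

End Aux.

Lemma img_addf (V : finType) (C : Type) (ar : C -> nat)
    (I : forall c, ('I_(ar c) -> V) -> V) (dis : V -> V -> V) v A G :
  img I dis v (addf A G) = eval I dis v A |: img I dis v G.
Proof.
apply/setP => x; rewrite in_setU1 !inE; apply/asboolP/orP.
- case=> B [[->|GB] <-]; first by left.
  by right; apply/asboolP; exists B.
- case=> [/eqP->|/asboolP[B [GB <-]]]; first by exists A; split => //; left.
  by exists B; split => //; right.
Qed.

Lemma ex1 (V : finType) (z : V) (P : {set V}) :
  (exists w, w \in z |: ~: P /\ w \in P) <-> z \in P.
Proof.
split.
- by case=> w [] ; rewrite !inE => /orP[/eqP->//|/negP ? ?].
- by move=> zP; exists z; rewrite !inE eqxx.
Qed.

Lemma ex2 (V : finType) (x y : V) (P : {set V}) :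
  (exists w, w \in x |: (y |: ~: P) /\ w \in P) <-> (x \in P) || (y \in P).
Proof.
split.
- case=> w []; rewrite !inE => /orP[/eqP->->//|/orP[/eqP->->|/negP ? ?]].
  + by rewrite orbT.
  + done.
- case/orP => h; [exists x | exists y]; by rewrite !inE eqxx ?orbT.
Qed.

Theorem theorem7p2 (V : finType) (one zero : V) (C : Type) (ar : C -> nat)
    (I : forall c, ('I_(ar c) -> V) -> V) (R : {set V} -> {set V} -> Prop) :
  one != zero ->
  (exists L, is_rep one zero R L) ->
  const_expressive I ->
  [/\ ((exists dis : V -> V -> V, G_disjunction I R dis) ->
        forall L, is_min_rep one zero R L -> disj_compatible (rep_sets L)),
      ((forall L, is_min_rep one zero R L -> disj_compatible (rep_sets L)) ->
        exists L, is_rep one zero R L /\ disj_compatible (rep_sets L))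
    & ((exists L, is_rep one zero R L /\ disj_compatible (rep_sets L)) ->
        exists dis : V -> V -> V, G_disjunction I R dis)].
Proof.
move=> _ [L0 rep0] hCE; split.
- case=> dis Gd L Lmin x y.
  have [Ax [_ HAx]] := hCE x. have [Ay [_ HAy]] := hCE y.
  exists (dis x y) => D /mem_rep_sets [p pL HD].
  pose CG (g : {set V}) : form ar -> Prop :=
    fun A => exists2 u, u \in g & forall dis' v, eval I dis' v A = u.
  have imgC : forall v g, img I dis v (CG g) = g.
    move=> v g; apply/setP => u; rewrite inE; apply/asboolP/idP.
    - by case=> A [[w wg Hw] <-]; rewrite Hw.
    - move=> ug; have [A [_ HA]] := hCE u; exists A; split => //; by exists u.
  have eOr : forall v, eval I dis v (Or Ax Ay) = dis x y.
    by move=> v /=; rewrite HAx HAy.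
  have cc : forall G D g d, (forall v, img I dis v G = g) ->
      (forall v, img I dis v D = d) -> (conseq I dis R G D <-> R g d).
    move=> G D' g d HG HD'; rewrite /conseq; split.
    - move=> H; have := H (fun _ => x); by rewrite HG HD'.
    - by move=> H v; rewrite HG HD'.
  have R1 : forall g d, R g (dis x y |: d) <-> R g (x |: (y |: d)).
    move=> g d; have [H _] := Gd (CG g) (CG d) Ax Ay.
    have e1 : conseq I dis R (CG g) (addf (Or Ax Ay) (CG d)) <-> R g (dis x y |: d).
      by apply: cc => v; rewrite ?img_addf ?eOr imgC.
    have e2 : conseq I dis R (CG g) (addf Ax (addf Ay (CG d))) <-> R g (x |: (y |: d)).
      by apply: cc => v; rewrite ?img_addf ?HAx ?HAy imgC.
    split => h; [apply/e2/H/e1 | apply/e1/H/e2]; exact h.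
  have R2 : forall g d, R (dis x y |: g) d <-> R (x |: g) d /\ R (y |: g) d.
    move=> g d; have [_ H] := Gd (CG g) (CG d) Ax Ay.
    have e1 : conseq I dis R (addf (Or Ax Ay) (CG g)) (CG d) <-> R (dis x y |: g) d.
      by apply: cc => v; rewrite ?img_addf ?eOr imgC.
    have e2 : conseq I dis R (addf Ax (CG g)) (CG d) <-> R (x |: g) d.
      by apply: cc => v; rewrite ?img_addf ?HAx imgC.
    have e3 : conseq I dis R (addf Ay (CG g)) (CG d) <-> R (y |: g) d.
      by apply: cc => v; rewrite ?img_addf ?HAy imgC.
    split.
    + by move=> /e1/H [/e2 ? /e3 ?].
    + by case=> /e2 h2 /e3 h3; apply/e1/H.
  have [[_ _ HR] _] := Lmin.
  case: HD => ->.
  + have E : ML L (dis x y |: p.1) (~: p.2) <->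
        ML L (x |: p.1) (~: p.2) /\ ML L (y |: p.1) (~: p.2).
      split.
      * by move=> /HR /R2 [/HR ? /HR ?].
      * by case=> /HR ? /HR ?; apply/HR/R2.
    rewrite !(key_p Lmin _ pL) in E.
    have E' : ~~ (dis x y \in p.1) = ~~ (x \in p.1) && ~~ (y \in p.1).
      by apply/idP/andP => /E.
    by rewrite -[LHS]negbK E' negb_and !negbK.
  + have k1 := key_c Lmin pL (subsetU1 (dis x y) (~: p.2)).
    have k2 := key_c Lmin pL (subset_trans (subsetU1 y (~: p.2)) (subsetU1 x _)).
    apply/idP/idP.
    * by move=> /ex1/k1/HR/R1/HR/k2/ex2.
    * by move=> /ex2/k2/HR/R1/HR/k1/ex1.
- move=> H.
  have [L Lm] : exists L, is_min_rep one zero R L.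
    suff: forall n L, size L <= n -> is_rep one zero R L ->
        exists L', is_min_rep one zero R L'.
      by move=> /(_ _ L0 (leqnn _) rep0).
    elim=> [|n IH] L hs hr.
      by exists L; split => // L' _; exact: leq_trans hs (leq0n _).
    case: (classic (forall L', is_rep one zero R L' -> size L <= size L')) => [h|h].
      by exists L.
    case: (not_all_ex_not _ _ h) => L' hL'.
    have [hr' hlt] := imply_to_and _ _ hL'.
    apply: (IH L') => //; rewrite -ltnS; apply: leq_trans hs.
    by rewrite ltnNge; apply/negP.
  by exists L; split; [exact: Lm.1 | exact: H L Lm].
- case=> L [[_ _ HR] Hdc].
  have [dis Hdis] : exists dis : V -> V -> V, forall x y D, D \in rep_sets L ->
      (dis x y \in D) = (x \in D) || (y \in D).
    exists (fun x y => proj1_sig (cid (Hdc x y))) => x y.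
    exact: (proj2_sig (cid (Hdc x y))).
  exists dis => G D A B; split.
  + rewrite /conseq; split => H v; have := H v; rewrite !img_addf /= => /HR h;
      apply/HR => p pL;
      (have hp2 : p.2 \in rep_sets L by apply/mem_rep_sets; exists p; auto);
      move: (h p pL); rewrite /mixed !neq0U1 (Hdis _ _ _ hp2) ?orbA; exact id.
  + rewrite /conseq; split.
    * move=> H; split => v; have := H v; rewrite !img_addf /= => /HR h;
        apply/HR => p pL;
        (have hp1 : p.1 \in rep_sets L by apply/mem_rep_sets; exists p; auto);
        move: (h p pL); rewrite /mixed !subU1 (Hdis _ _ _ hp1);
        by move=> h1 /andP[h2 h3]; apply: h1; rewrite h2 h3 ?orbT.
    * case=> H1 H2 v; have := H1 v; have := H2 v; rewrite !img_addf /= => /HR h2 /HR h1.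
      apply/HR => p pL.
      have hp1 : p.1 \in rep_sets L by apply/mem_rep_sets; exists p; auto.
      move: (h1 p pL) (h2 p pL); rewrite /mixed !subU1 (Hdis _ _ _ hp1).
      move=> k1 k2 /andP[/orP[] ha hg]; [apply: k1 | apply: k2]; by rewrite ?ha ?hg.
Qed.
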